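(* In the setting described in the context, assume $G$ satisfies Condition 1. Then for every $r\ge0$ there exists a subset $\mathcal{I}_r$ of the non-faulty agents with $|\mathcal{I}_r|\ge\max\{sp(\mathbf{A}),f+1\}$ such that $\pi_i(r)\ge\beta^{\nu}$ for every $i\in\mathcal{I}_r$.
   Context: A synchronous system of $n$ agents communicates over a directed graph $G=(\mathcal{V},\mathcal{E})$, $\mathcal{V}=\{1,\dots,n\}$, without self-loops; $N_i^-=\{j:(j,i)\in\mathcal{E}\}$. At most $f$ agents are Byzantine faulty (may send arbitrary, possibly inconsistent values); $\mathcal{F}$ is the set of faulty agents, $\phi=|\mathcal{F}|\le f$, and the non-faulty agents are indexed $1,\dots,n-\phi$. An assignment matrix $\mathbf{A}\in\mathbb{R}^{k\times n}$ has nonnegative entries and columns summing to $1$; agent $i$ holds $g_i=\sum_{j=1}^k\mathbf{A}_{ji}h_j$ for admissible (convex, $L$-Lipschitz, nonempty compact argmin) $h_1,\dots,h_k:\mathbb{R}\to\mathbb{R}$. Sparsity parameter $sp(\mathbf{A})$: smallest $s$ such that the sum of any $s$ columns of $\mathbf{A}$ is component-wise positive ($n+1$ if the sum of all columns is not). Reduced graph w.r.t. $\mathcal{F}$: subgraph of $G$ obtained by removing the nodes of $\mathcal{F}$ with their edges and then removing up to $f$ additional incoming edges at each remaining node; $R_{\mathcal{F}}$ is the set of all reduced graphs, $\tau=|R_{\mathcal{F}}|$. A source component of a graph is the set of its nodes each having a directed path to every other node of the graph. Condition 1: for every $\mathcal{F}'\subseteq\mathcal{V}$ with $|\mathcal{F}'|\le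 f$, every reduced graph w.r.t. $\mathcal{F}'$ has a source component with at least $\max\{f+1,sp(\mathbf{A})\}$ nodes. Algorithm 2 (run by non-faulty agents, step sizes $\alpha(t)$): arbitrary $x_i(0)$; in iteration $t\ge1$ agent $i$ sends $x_i(t-1)$ to all out-neighbors, receives a multiset of $|N_i^-|$ values (default value for missing messages), discards the $f$ smallest and $f$ largest values, lets $N_i^*(t)$ be the senders of the remaining values with $w_j$ the value from $j$, sets $w_i=x_i(t-1)$, and updates $x_i(t)=\frac{1}{|N_i^*(t)|+1}\sum_{j\in\{i\}\cup N_i^*(t)}w_j-\alpha(t-1)d_i(t-1)$, with $d_i(t-1)$ a (sub)gradient of $g_i$ at $x_i(t-1)$. Known facts: with $\mathbf{x}(t)\in\mathbb{R}^{n-\phi}$ the non-faulty states and $\mathbf{d}(t)$ the vector of $d_i(t)$, $\mathbf{x}(t+1)=\mathbf{M}(t)\mathbf{x}(t)-\alpha(t)\mathbf{d}(t)$ for row-stochastic $(n-\phi)\times(n-\phi)$ matrices $\mathbf{M}(t)$, and there is a constant $0<\beta<1$ such that for every $t$ some reduced graph $\mathcal{H}(t)\in R_{\mathcal{F}}$ with adjacency matrix $\mathbf{H}(t)$ ($\mathbf{H}_{ij}(t)=1$ if $i=j$ or $(j,i)$ is an edge of $\mathcal{H}(t)$, else $0$) satisfies $\mathbf{M}(t)\ge\beta\mathbf{H}(t)$ entrywise. Let $\Phi(t,r)=\mathbf{M}(t)\cdots\mathbf{M}(r)$ for $t\ge r$ and $\nu=\tau(n-\phi)$. Under Condition 1,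 for each $r$ the limit $\lim_{t\to\infty}\Phi(t,r)=\mathbf{1}\pi(r)$ exists, where $\mathbf{1}$ is the all-ones column vector and $\pi(r)=(\pi_1(r),\dots,\pi_{n-\phi}(r))$ is a stochastic row vector. *)

(* Defs.v *)
From HB Require Import structures.
From mathcomp Require Import all_boot all_order all_algebra.
From mathcomp Require Import reals.
Set Implicit Arguments. Unset Strict Implicit. Unset Printing Implicit Defensive.
Import Order.TTheory GRing.Theory Num.Theory.
Local Open Scope ring_scope.

(* Agents are 'I_n.  A directed graph on 'I_n is a set of edges;
   the pair (j, i) denotes the edge j -> i. *)
Definition digraph (n : nat) := {set ('I_n * 'I_n)}.

Definition no_self_loops n (G : digraph n) := forall i : 'I_n, (i, i) \notin G.

Definition assignment_matrix (R : realType) k n (A : 'M[R]_(k, n)) :=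
  (forall j i, 0 <= A j i) /\ (forall i, \sum_(j < k) A j i = 1).

(* sp(A): the smallest s such that the sum of any s (distinct) columns of A is
   componentwise positive; n+1 if the sum of all columns is not. *)
Definition sp_ok (R : realType) k n (A : 'M[R]_(k, n)) (s : nat) : bool :=
  [forall S : {set 'I_n}, (#|S| == s) ==> [forall j : 'I_k, 0 < \sum_(i in S) A j i]].

Definition sp (R : realType) k n (A : 'M[R]_(k, n)) : nat :=
  find (sp_ok A) (iota 0 n.+1).

(* E' is a reduced graph of G w.r.t. F (node set ~: F): obtained by removing
   the nodes of F with their edges, and then up to f additional incoming
   edges at each remaining node. *)
Definition reduced_graph n (G : digraph n) (f : nat) (F : {set 'I_n})
    (E' : digraph n) : Prop :=
  E' \subset [set e in G | (e.1 \notin F) && (e.2 \notin F)] /\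
  forall i : 'I_n, i \notin F ->
    (#|[set j : 'I_n | [&& (j, i) \in G, j \notin F & (j, i) \notin E']]| <= f)%N.

Definition reduced_graphs n (G : digraph n) (f : nat) (F : {set 'I_n})
  : {set digraph n} :=
  [set E' : digraph n |
     (E' \subset [set e in G | (e.1 \notin F) && (e.2 \notin F)]) &&
     [forall i : 'I_n, (i \notin F) ==>
        (#|[set j : 'I_n | [&& (j, i) \in G, j \notin F & (j, i) \notin E']]| <= f)%N]].

Definition source_component n (V : {set 'I_n}) (E' : digraph n) : {set 'I_n} :=
  [set i in V | [forall j in V, connect (fun a b => (a, b) \in E') i j]].

Definition condition1 (R : realType) k n (G : digraph n) (f : nat)
    (A : 'M[R]_(k, n)) : Prop :=
  forall F' : {set 'I_n}, (#|F'| <= f)%N ->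
    forall E' : digraph n, reduced_graph G f F' E' ->
      (maxn f.+1 (sp A) <= #|source_component (~: F') E'|)%N.

(* The non-faulty agents are indexed by 'I_#|~: F| (#|~: F| = n - phi). *)
Definition nf_idx n (F : {set 'I_n}) (i : 'I_#|~: F|) : 'I_n :=
  enum_val (A := ~: F) i.

Definition adj_matrix (R : realType) n (F : {set 'I_n}) (E' : digraph n)
  : 'M[R]_#|~: F| :=
  \matrix_(i, j) (if (i == j) || ((@nf_idx n F j, @nf_idx n F i) \in E') then 1 else 0).

Definition row_stochastic (R : realType) m (M : 'M[R]_m) : Prop :=
  (forall i j, 0 <= M i j) /\ (forall i, \sum_(j < m) M i j = 1).

Definition stochastic_row (R : realType) m (p : 'rV[R]_m) : Prop :=
  (forall j, 0 <= p 0 j) /\ \sum_(j < m) p 0 j = 1.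

Fixpoint PhiK (R : realType) m (M : nat -> 'M[R]_m) (r k : nat) : 'M[R]_m :=
  match k with
  | 0 => M r
  | k'.+1 => M (r + k'.+1)%N *m PhiK M r k'
  end.

Definition Phi (R : realType) m (M : nat -> 'M[R]_m) (t r : nat) : 'M[R]_m :=
  PhiK M r (t - r).

Definition Phi_converges (R : realType) m (M : nat -> 'M[R]_m)
    (pi : nat -> 'rV[R]_m) : Prop :=
  forall r (i j : 'I_m) (eps : R), 0 < eps ->
    exists N : nat, forall t, (N <= t)%N -> `|Phi M t r i j - pi r 0 j| < eps.

(* Main.v *)
Require Import Defs.
From HB Require Import structures.
From mathcomp Require Import all_boot all_order all_algebra.
From mathcomp Require Import reals zify.
Import Order.TTheory GRing.Theory Num.Theory.
Local Open Scope ring_scope.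
Set Implicit Arguments. Unset Strict Implicit.

Lemma PhiK_split (R : realType) m (M : nat -> 'M[R]_m) r a b :
  PhiK M r (b + a.+1) = PhiK M (r + b.+1) a *m PhiK M r b.
Proof.
elim: a => [|a IH].
  by rewrite addn1 /=.
rewrite addnS /= IH mulmxA.
by have -> : (r + (b + a.+1).+1 = r + b.+1 + a.+1)%N by lia.
Qed.

Lemma row_stoch_mul (R : realType) m (A B : 'M[R]_m) :
  row_stochastic A -> row_stochastic B -> row_stochastic (A *m B).
Proof.
move=> [A0 A1] [B0 B1]; split.
  move=> i j; rewrite mxE; apply: sumr_ge0 => l _; exact: mulr_ge0.
move=> i; under eq_bigr => j _ do rewrite mxE.
rewrite exchange_big /= -(A1 i); apply: eq_bigr => l _.
by rewrite -mulr_sumr B1 mulr1.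
Qed.

Lemma PhiK_stoch (R : realType) m (M : nat -> 'M[R]_m) r k :
  (forall t, row_stochastic (M t)) -> row_stochastic (PhiK M r k).
Proof.
move=> HM; elim: k => [|k IH] /=; first exact: HM.
exact: row_stoch_mul.
Qed.

Fixpoint Qm (R : realType) m (M : nat -> 'M[R]_m) r k : 'M[R]_m :=
  match k with 0 => 1%:M | k'.+1 => M (r + k')%N *m Qm M r k' end.

Lemma QmE (R : realType) m (M : nat -> 'M[R]_m) r k :
  Qm M r k.+1 = PhiK M r k.
Proof.
elim: k => [|k IH] /=; first by rewrite addn0 mulmx1.
by rewrite -IH.
Qed.

Lemma Qm_ge0 (R : realType) m (M : nat -> 'M[R]_m) r k :
  (forall t, row_stochastic (M t)) -> forall i j, 0 <= Qm M r k i j.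
Proof.
move=> HM; case: k => [|k] i j; first by rewrite mxE; case: (i == j).
rewrite QmE; exact: ((PhiK_stoch r k HM).1 i j).
Qed.
Definition stepS n (H : digraph n) (S : {set 'I_n}) : {set 'I_n} :=
  S :|: [set y | [exists x in S, (x, y) \in H]].
Definition Rset n (H : digraph n) (i0 : 'I_n) c := iter c (stepS H) [set i0].

Lemma stepS_sub n (H : digraph n) (S : {set 'I_n}) : S \subset stepS H S.
Proof. exact: subsetUl. Qed.

Lemma Rset_mono n (H : digraph n) i0 c c' : (c <= c')%N -> Rset H i0 c \subset Rset H i0 c'.
Proof.
move=> /subnK <-; elim: (c' - c)%N => [|d IH] //=.
apply: subset_trans IH _; exact: stepS_sub.
Qed.

Lemma Rset_sub n (H : digraph n) i0 (V : {set 'I_n}) c :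
  i0 \in V -> (forall x y, (x, y) \in H -> y \in V) -> Rset H i0 c \subset V.
Proof.
move=> i0V HV; elim: c => [|c IH] /=; first by rewrite sub1set.
rewrite /stepS subUset IH /=; apply/subsetP => y; rewrite inE.
by case/existsP => x /andP [_ /HV].
Qed.

Lemma Rset_fix n (H : digraph n) i0 (V : {set 'I_n}) c :
  i0 \in V -> (forall x y, (x, y) \in H -> y \in V) -> (#|V| <= c)%N ->
  stepS H (Rset H i0 c) = Rset H i0 c.
Proof.
move=> i0V HV cV.
suff : (c.+1 <= #|Rset H i0 c|)%N \/ stepS H (Rset H i0 c) = Rset H i0 c.
  case=> // Hc; have := subset_leq_card (Rset_sub c i0V HV); lia.
elim: c {cV} => [|c IH].
  by left; rewrite /= cards1.
case: IH.
- move=> Hc.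
  have [E|NE] := eqVneq (stepS H (Rset H i0 c.+1)) (Rset H i0 c.+1); first by right.
  left.
  have : Rset H i0 c \proper Rset H i0 c.+1.
    rewrite properEneq stepS_sub andbT; apply/eqP => E.
    have F : stepS H (Rset H i0 c) = Rset H i0 c := esym E.
    move: NE; change (stepS H (stepS H (Rset H i0 c)) != stepS H (Rset H i0 c) -> False).
    by rewrite !F eqxx.
  move/proper_card => /= H2; exact: (leq_ltn_trans Hc H2).
- move=> E; right; by rewrite /= E.
Qed.

Lemma Rset_connect n (H : digraph n) (S : {set 'I_n}) x y :
  stepS H S = S -> x \in S -> connect (fun a b => (a, b) \in H) x y -> y \in S.
Proof.
move=> fx xS /connectP [p Hp ->] {y}.
elim: p x xS Hp => [|z p IH] x xS //= /andP [exz Hp].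
apply: IH Hp; rewrite -fx /stepS inE; apply/orP; right.
rewrite inE; apply/existsP; exists x; by rewrite xS.
Qed.

Lemma sum_ge_term (R : realType) m (F : 'I_m -> R) l0 :
  (forall l, 0 <= F l) -> F l0 <= \sum_(l < m) F l.
Proof.
move=> F0; rewrite (bigD1 l0) //= lerDl; apply: sumr_ge0 => l _; exact: F0.
Qed.

Lemma nf_idx_surj n (F : {set 'I_n}) x : x \in ~: F -> exists l, @nf_idx n F l = x.
Proof. move=> xF; exists (enum_rank_in xF x); rewrite /nf_idx enum_rankK_in //. Qed.

Lemma prod_bound (R : realType) n (F : {set 'I_n}) (M : nat -> 'M[R]_#|~:F|)
  (beta : R) (Hf : nat -> digraph n) (H : digraph n) r (a : 'I_#|~:F|) :
  0 < beta -> (forall t, row_stochastic (M t)) ->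
  (forall t i j, beta * adj_matrix R F (Hf t) i j <= M t i j) ->
  (forall x y, (x,y) \in H -> x \in ~:F) ->
  forall k j, nf_idx j \in Rset H (nf_idx a) (\sum_(s < k) (Hf (r+s)%N == H))%N ->
     beta ^+ k <= Qm M r k j a.
Proof.
move=> b0 HM Hb HF; elim=> [|k IH] j.
  rewrite big_ord0 /= inE => /eqP /enum_val_inj ->.
  by rewrite expr0 mxE eqxx.
have Mjj : forall t, beta <= M t j j.
  move=> t; apply: le_trans (Hb t j j); by rewrite mxE eqxx /= mulr1.
have diag : nf_idx j \in Rset H (nf_idx a) (\sum_(s < k) (Hf (r+s)%N == H))%N ->
    beta ^+ k.+1 <= Qm M r k.+1 j a.
  move=> Hj; rewrite /= mxE exprS.
  apply: le_trans (sum_ge_term j _); last first.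
    by move=> l; apply: mulr_ge0; [exact: (HM _).1 | exact: Qm_ge0].
  apply: ler_pM => //; [exact: ltW | exact: exprn_ge0 (ltW b0) | exact: IH].
rewrite big_ord_recr /=.
case: eqP => [EH | _]; last by rewrite addn0; exact: diag.
rewrite addn1 /= {1}/stepS inE => /orP [|]; first exact: diag.
rewrite inE => /existsP [x /andP [xR xj]].
have [l El] := nf_idx_surj (HF _ _ xj).
rewrite /= mxE exprS.
apply: le_trans (sum_ge_term l _); last first.
  by move=> l'; apply: mulr_ge0; [exact: (HM _).1 | exact: Qm_ge0].
apply: ler_pM => //; [exact: ltW | exact: exprn_ge0 (ltW b0) | | ].
  apply: le_trans (Hb (r + k)%N j l); rewrite mxE EH El xj orbT mulr1 //.
by apply: IH; rewrite El.
Qed.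

Unset Implicit Arguments.

Theorem lemma3 (R : realType) (n k f : nat) (G : digraph n)
    (A : 'M[R]_(k, n)) (F : {set 'I_n})
    (M : nat -> 'M[R]_#|~: F|) (beta : R) (pi : nat -> 'rV[R]_#|~: F|) :
  no_self_loops G ->
  assignment_matrix A ->
  (#|F| <= f)%N ->
  condition1 G f A ->
  0 < beta -> beta < 1 ->
  (forall t, row_stochastic (M t)) ->
  (forall t, exists2 E' : digraph n, E' \in reduced_graphs G f F &
       forall i j, beta * adj_matrix R F E' i j <= M t i j) ->
  (forall r, stochastic_row (pi r)) ->
  Phi_converges M pi ->
  forall r : nat,
    exists I : {set 'I_#|~: F|},
      (maxn (sp A) f.+1 <= #|I|)%N /\
      forall i, i \in I ->
        beta ^+ (#|reduced_graphs G f F| * #|~: F|) <= pi r 0 i.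
Proof.
move=> _ _ HFf HC1 b0 b1 HM HE Hpi Hconv r.
set RG := reduced_graphs G f F.
pose Hf t := odflt set0 [pick E' in RG | [forall i, forall j,
                 beta * adj_matrix R F E' i j <= M t i j]].
have HfP : forall t, Hf t \in RG /\ forall i j, beta * adj_matrix R F (Hf t) i j <= M t i j.
  move=> t; rewrite /Hf; case: pickP => [E /andP [EG /forallP Hb]|N] /=.
    by split=> // i j; move/forallP: (Hb i); apply.
  have [E EG Hb] := HE t; move: (N E); rewrite EG /=.
  by move/negbT/negP; case; apply/forallP => i; apply/forallP => j; exact: Hb.
have m0 : (0 < #|~: F|)%N.
  rewrite lt0n; apply/eqP => E.
  have := (Hpi r).2; rewrite big1 => [|j _].
    by move/eqP; rewrite eq_sym oner_eq0.
  by move: (ltn_ord j); rewrite [X in (_ < X)%N]E.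
have t0 : (0 < #|RG|)%N by apply/card_gt0P; exists (Hf 0%N); exact: (HfP 0%N).1.
set m := #|~: F| in m0 *.
set nu := (#|RG| * m)%N.
have [H HRG Hcnt] : exists2 H, H \in RG & (m <= \sum_(s < nu) (Hf (r+s)%N == H))%N.
  case: (boolP [exists H in RG, (m <= \sum_(s < nu) (Hf (r+s)%N == H))%N]).
    by case/existsP => H /andP [? ?]; exists H.
  rewrite negb_exists => /forallP Hno; exfalso.
  have Hsum : (\sum_(E in RG) \sum_(s < nu) (Hf (r+s)%N == E) = nu)%N.
    rewrite exchange_big /= -[in RHS](card_ord nu) -sum1_card; apply: eq_bigr => s _.
    rewrite (bigD1 (Hf (r+s)%N)) ?(HfP _).1 //= eqxx big1 // => E /andP [_ NE].
    by rewrite eq_sym (negbTE NE).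
  have : (\sum_(E in RG) \sum_(s < nu) (Hf (r+s)%N == E) <= \sum_(E in RG) m.-1)%N.
    apply: leq_sum => E ER; have := Hno E; rewrite ER /= -ltnNge => h.
    by rewrite -ltnS prednK.
  rewrite Hsum sum_nat_const /nu.
  move: t0 m0; set a := #|RG|; nia.
move: (HRG); rewrite inE => /andP [Hs /forallP Hc].
have Hred : reduced_graph G f F H by split=> // i iF; exact: (implyP (Hc i) iF).
have Hcard := HC1 F HFf H Hred.
set SC := source_component (~: F) H in Hcard.
have HF : forall x y, (x, y) \in H -> x \in ~: F.
  by move=> x y /(subsetP Hs); rewrite inE /= => /andP [_ /andP [? _]]; rewrite inE.
have HF2 : forall x y, (x, y) \in H -> y \in ~: F.
  by move=> x y /(subsetP Hs); rewrite inE /= => /andP [_ /andP [_ ?]]; rewrite inE.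
exists [set a | @nf_idx n F a \in SC]; split.
  have -> : #|[set a | @nf_idx n F a \in SC]| = #|SC|.
    have Hinj : injective (@nf_idx n F) by move=> x y; exact: enum_val_inj.
    apply: eq_trans (esym (card_imset _ Hinj)) _.
    have E : (@nf_idx n F) @: [set a | @nf_idx n F a \in SC] = SC.
      apply/setP => x; apply/imsetP/idP => [[a] | xS].
        by rewrite inE => ? ->.
      have xF : x \in ~: F by move: xS; rewrite inE => /andP [].
      have [l El] := nf_idx_surj xF; exists l => //; by rewrite inE El.
    by rewrite E.
  by rewrite maxnC.
move=> a; rewrite inE => aSC.
move: (aSC); rewrite inE => /andP [aF /forallP Hconn].
have Hfix := @Rset_fix n H (nf_idx a) (~:F) m aF HF2 (leqnn _).
have Pbound : forall j, beta ^+ nu <= Qm M r nu j a.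
  move=> j; apply: (@prod_bound R n F M beta Hf H r a) => //.
  - by move=> t i' j'; exact: (HfP t).2.
  - apply: (subsetP (@Rset_mono n H (nf_idx a) _ _ Hcnt)).
    apply: (@Rset_connect n H _ (nf_idx a) _ Hfix).
    + apply: (subsetP (@Rset_mono n H (nf_idx a) 0 m _)) => //; by rewrite /= inE.
    + exact: (implyP (Hconn _) (enum_valP _)).
have [nu' Enu] : exists nu', nu = nu'.+1.
  by exists nu.-1; rewrite prednK // /nu muln_gt0 t0 m0.
rewrite leNgt; apply/negP => Hlt.
have hpos : 0 < beta ^+ nu - pi r 0 a by rewrite subr_gt0.
have [N HN] := Hconv r a a (beta ^+ nu - pi r 0 a) hpos.
have hN : (N <= N + nu + r)%N by rewrite -addnA leq_addr.
have := HN (N + nu + r)%N hN.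
rewrite /Phi.
have -> : (N + nu + r - r = nu' + N.+1)%N by rewrite addnK Enu !addnS addnC.
rewrite PhiK_split.
have Hge : beta ^+ nu <= (PhiK M (r + nu'.+1) N *m PhiK M r nu') a a.
  rewrite mxE; have [X0 X1] := PhiK_stoch (r+nu'.+1) N HM.
  apply: le_trans (_ : \sum_j PhiK M (r + nu'.+1) N a j * beta ^+ nu <= _).
    by rewrite -mulr_suml X1 mul1r.
  apply: ler_sum => j _; apply: ler_wpM2l; first exact: X0.
  by rewrite -QmE -Enu; exact: Pbound.
move=> Hd.
have := ler_norm ((PhiK M (r + nu'.+1) N *m PhiK M r nu') a a - pi r 0 a).
move=> h; have := le_lt_trans h Hd; rewrite ltrD2r ltNge Hge //.
Qed.
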